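(* Let $X_\lambda$ be a cellular multipointed $d$-space and $\gamma$ an execution path of $X_\lambda$. Then there exist minimal execution paths $\gamma_1,\dots,\gamma_n$ ($n\ge1$) and real numbers $\ell_1,\dots,\ell_n>0$ with $\sum_i\ell_i=1$ such that $\gamma=(\gamma_1\mu_{\ell_1})*\dots*(\gamma_n\mu_{\ell_n})$. Moreover, if also $\gamma=(\gamma'_1\mu_{\ell'_1})*\dots*(\gamma'_{n'}\mu_{\ell'_{n'}})$ with all $\gamma'_j$ minimal and $\ell'_j>0$, then $n=n'$, $\gamma_i=\gamma'_i$ and $\ell_i=\ell'_i$ for all $1\le i\le n$.
   Context: Work in $\mathbf{Top}$, the category of $\Delta$-generated spaces (or $\Delta$-Hausdorff $\Delta$-generated spaces). $\mathcal{G}(1,1)$: nondecreasing homeomorphisms of $[0,1]$. $\mu_\ell:[0,\ell]\to[0,1]$, $t\mapsto t/\ell$. Moore composition: for $\gamma_i:[0,\ell_i]\to U$ with $\gamma_i(\ell_i)=\gamma_{i+1}(0)$, $\gamma_1*\dots*\gamma_n:[0,\sum\ell_i]\to U$ is $t\mapsto\gamma_i(t-\sum_{j<i}\ell_j)$ on $[\sum_{j<i}\ell_j,\sum_{j\le i}\ell_j]$. $*_N$: normalized composition of paths on $[0,1]$. A multipointed $d$-space $X=(|X|,X^0,\mathbb{P}^{\mathcal{G}}X)$: a space, a subset of states, a set of continuous execution paths $[0,1]\to|X|$ with endpoints in $X^0$, stable under precomposition by $\mathcal{G}(1,1)$ and $*_N$. Colimits: underlying spaces and states by colimits, execution paths generated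 by images under $*_N$ and reparametrization. ${\rm Glob}^{\mathcal{G}}(Z)$: quotient of $\{0,1\}\sqcup Z\times[0,1]$ with $(z,0)\sim0$, $(z,1)\sim1$, states $\{0,1\}$, paths $t\mapsto(z,\phi(t))$, $\phi\in\mathcal{G}(1,1)$. Cellular: $X_\lambda=\varinjlim_{\nu<\lambda}X_\nu$ for an ordinal $\lambda$ and colimit-preserving $\nu\mapsto X_\nu$ with $X_0=(X^0,X^0,\varnothing)$ and each $X_\nu\to X_{\nu+1}$ a pushout of some ${\rm Glob}^{\mathcal{G}}(\mathbf{S}^{n_\nu-1})\subset{\rm Glob}^{\mathcal{G}}(\mathbf{D}^{n_\nu})$. An execution path $\gamma$ of $X$ is minimal if $\gamma(]0,1[)\cap X^0=\varnothing$. *)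

(* Defs.v *)
From HB Require Import structures.
From mathcomp Require Import all_boot all_order all_algebra.
From mathcomp Require Import all_classical all_reals all_analysis.
Set Implicit Arguments. Unset Strict Implicit. Unset Printing Implicit Defensive.
Import Order.TTheory GRing.Theory Num.Theory.
Import numFieldNormedType.Exports.
Local Open Scope classical_set_scope.
Local Open Scope ring_scope.
Local Open Scope quotient_scope.

Section MDSpaces.
Variable R : realType.

Definition I01 : set R := [set t | 0 <= t <= 1].

(** G(1,1): nondecreasing homeomorphisms of [0,1] (as functions R -> R,
    only their values on [0,1] matter) *)
Definition G11 (phi : R -> R) : Prop :=
  {within I01, continuous phi} /\
  (forall t, I01 t -> I01 (phi t)) /\
  (forall s t, I01 s -> I01 t -> s <= t -> phi s <= phi t) /\
  exists psi : R -> R,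
    {within I01, continuous psi} /\ (forall t, I01 t -> I01 (psi t)) /\
    (forall t, I01 t -> psi (phi t) = t) /\ (forall t, I01 t -> phi (psi t) = t).

Definition ncomp (T : Type) (g1 g2 : R -> T) : R -> T :=
  fun t => if t <= 2^-1 then g1 (2 * t) else g2 (2 * t - 1).

(** Execution paths [0,1] -> |X| are represented by functions R -> |X|
    whose values outside [0,1] are irrelevant (see is_mdspace). *)
Record mdspace := MDSpace {
  mcar :> topologicalType;
  mstates : set mcar;
  mpaths : set (R -> mcar) }.
Arguments mstates : clear implicits.
Arguments mpaths : clear implicits.

Definition is_mdspace (X : mdspace) : Prop :=
  (forall g, mpaths X g ->
     {within I01, continuous g} /\ mstates X (g 0) /\ mstates X (g 1)) /\
  (forall g phi, mpaths X g -> G11 phi -> mpaths X (g \o phi)) /\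
  (forall g1 g2, mpaths X g1 -> mpaths X g2 -> g1 1 = g2 0 ->
     mpaths X (ncomp g1 g2)) /\
  (* a path is a map on [0,1]: values outside [0,1] are irrelevant *)
  (forall g g', mpaths X g -> (forall t, I01 t -> g' t = g t) -> mpaths X g').

Definition morphism (X Y : mdspace) (h : X -> Y) : Prop :=
  continuous h /\ (forall x, mstates X x -> mstates Y (h x)) /\
  (forall g, mpaths X g -> mpaths Y (h \o g)).

Definition is_pushout (A B C D : mdspace) (i : A -> B) (phi : A -> C)
    (j : C -> D) (psi : B -> D) : Prop :=
  is_mdspace D /\ morphism j /\ morphism psi /\ j \o phi = psi \o i /\
  forall (W : mdspace) (u : C -> W) (v : B -> W),
    is_mdspace W -> morphism u -> morphism v -> u \o phi = v \o i ->
    exists w : D -> W, (morphism w /\ w \o j = u /\ w \o psi = v) /\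
      forall w' : D -> W, morphism w' -> w' \o j = u -> w' \o psi = v -> w' = w.

Definition is_colimit_on (d : Order.disp_t) (O : orderType d) (P : set O)
    (Xs : O -> mdspace) (f : forall a b : O, Xs a -> Xs b)
    (Y : mdspace) (g : forall a : O, Xs a -> Y) : Prop :=
  is_mdspace Y /\ (forall a, P a -> morphism (g a)) /\
  (forall a b, P a -> P b -> (a <= b)%O -> g b \o f a b = g a) /\
  forall (W : mdspace) (h : forall a : O, Xs a -> W),
    is_mdspace W -> (forall a, P a -> morphism (h a)) ->
    (forall a b, P a -> P b -> (a <= b)%O -> h b \o f a b = h a) ->
    exists u : Y -> W, (morphism u /\ forall a, P a -> u \o g a = h a) /\
      forall u' : Y -> W, morphism u' -> (forall a, P a -> u' \o g a = h a) ->
        u' = u.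

Arguments is_colimit_on {d O} P Xs f Y g.

(** ** Globes  Glob(Z) = ({0,1} ⊔ Z×[0,1]) / ((z,0)~0, (z,1)~1) *)
Section Glob.
Variable Z : topologicalType.

Definition boolT : topologicalType := bool.
Definition cylT : topologicalType := (Z * set_type I01)%type.
(* the disjoint sum {0,1} ⊔ Z×[0,1]  (true = the discrete {0,1}) *)
Definition glob_fam (b : bool) : topologicalType := if b then boolT else cylT.
Definition glob_pre := {b : bool & glob_fam b}.

(* class of a point: the endpoint it is glued to, if any *)
Definition glob_key (x : glob_pre) : bool + glob_pre :=
  match x with
  | existT b y =>
    (match b return glob_fam b -> bool + glob_pre with
     | true => fun y => inl y
     | false => fun y =>
         if sval y.2 == 0 then inl false
         else if sval y.2 == 1 then inl true
         else inr (existT glob_fam false y)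
     end) y
  end.

Definition glob_rel' (x y : glob_pre) : bool := `[< glob_key x = glob_key y >].

Lemma glob_rel_refl : reflexive glob_rel'.
Proof. by move=> x; apply/asboolP. Qed.
Lemma glob_rel_sym : symmetric glob_rel'.
Proof.
move=> x y; apply/idP/idP => /asboolP e; apply/asboolP; by rewrite e.
Qed.
Lemma glob_rel_trans : transitive glob_rel'.
Proof.
move=> y x z /asboolP e1 /asboolP e2; apply/asboolP; by rewrite e1 e2.
Qed.

Definition glob_rel := EquivRel _ glob_rel_refl glob_rel_sym glob_rel_trans.
Definition glob := {eq_quot glob_rel}.
HB.instance Definition _ := Topological.copy glob (quotient_topology glob).
HB.instance Definition _ := Quotient.on glob.

Lemma I01_0 : (0 : R) \in I01.
Proof. by apply/mem_set; rewrite /I01 /= lexx ler01. Qed.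

Definition to01 (t : R) : set_type I01 :=
  match pselect (I01 t) with
  | left h => exist _ t (mem_set h)
  | right _ => exist _ 0 I01_0
  end.

Definition glob_pt (b : bool) : glob := \pi_glob (existT glob_fam true b).
Definition glob_cyl (z : Z) (t : R) : glob :=
  \pi_glob (existT glob_fam false (z, to01 t)).

Definition Glob : mdspace := @MDSpace glob
  [set x | exists b, x = glob_pt b]
  [set g | exists z phi, G11 phi /\ forall t, I01 t -> g t = glob_cyl z (phi t)].
End Glob.

Definition glob_pre_map (Z Z' : topologicalType) (h : Z -> Z')
    (x : glob_pre Z) : glob_pre Z' :=
  match x with
  | existT b y =>
    (match b return glob_fam Z b -> glob_pre Z' with
     | true => fun y => existT (glob_fam Z') true y
     | false => fun y => existT (glob_fam Z') false (h y.1, y.2)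
     end) y
  end.
Definition glob_map (Z Z' : topologicalType) (h : Z -> Z') :
    Glob Z -> Glob Z' :=
  fun q => \pi_(glob Z') (glob_pre_map h (repr q)).

Definition disk (n : nat) : set 'rV[R]_n :=
  [set x | \sum_(i < n) x ord0 i ^+ 2 <= 1].
Definition sphere (n : nat) : set 'rV[R]_n :=
  [set x | \sum_(i < n) x ord0 i ^+ 2 = 1].
Definition Dsk (n : nat) : topologicalType := set_type (@disk n).
Definition Sph (n : nat) : topologicalType := set_type (@sphere n).

Lemma sphere_disk (n : nat) (x : Sph n) : sval x \in @disk n.
Proof.
apply/mem_set; have := set_mem (svalP x); rewrite /sphere /disk /= => ->.
exact: lexx.
Qed.
Definition sph_to_dsk (n : nat) (x : Sph n) : Dsk n :=
  exist _ (sval x) (sphere_disk x).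

Definition cell_incl (n : nat) : Glob (Sph n) -> Glob (Dsk n) :=
  glob_map (@sph_to_dsk n).

Section Tower.
Context {d : Order.disp_t} {O : orderType d}.

Definition is_least (a : O) : Prop := forall b, ~ (b < a)%O.
Definition is_succ (a b : O) : Prop :=
  (a < b)%O /\ forall c, ~ ((a < c)%O /\ (c < b)%O).
Definition is_limit (b : O) : Prop := ~ is_least b /\ forall a, ~ is_succ a b.

(* (X_nu)_{nu < lambda} indexed by the well-ordered O (= lambda), with
   X = X_lambda = colim_{nu < lambda} X_nu *)
Definition cellular_tower (Xs : O -> mdspace) (f : forall a b : O, Xs a -> Xs b)
    (X : mdspace) (g : forall a : O, Xs a -> X) : Prop :=
  well_founded (fun a b : O => (a < b)%O) /\
  (forall a, is_mdspace (Xs a)) /\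
  (forall a b, (a <= b)%O -> morphism (f a b)) /\
  (forall a, f a a = id) /\
  (forall a b c, (a <= b)%O -> (b <= c)%O -> f b c \o f a b = f a c) /\
  (forall a, is_least a ->
     (forall A : set (Xs a), open A) /\ mstates (Xs a) = setT /\
     mpaths (Xs a) = set0) /\
  (forall a b, is_succ a b ->
     exists (n : nat) (phi : Glob (Sph n) -> Xs a) (psi : Glob (Dsk n) -> Xs b),
       morphism phi /\ is_pushout (@cell_incl n) phi (f a b) psi) /\
  (forall b, is_limit b ->
     is_colimit_on [set a | (a < b)%O] Xs f (Xs b) (fun a => f a b)) /\
  is_colimit_on setT Xs f X g.
End Tower.
Arguments cellular_tower {d O} Xs f X g.

Definition cellular (X : mdspace) : Prop :=
  exists (d : Order.disp_t) (O : orderType d) (Xs : O -> mdspace)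
    (f : forall a b : O, Xs a -> Xs b) (g : forall a : O, Xs a -> X),
    cellular_tower Xs f X g.

Definition minimal (X : mdspace) (g : R -> X) : Prop :=
  mpaths X g /\ forall t, 0 < t < 1 -> ~ mstates X (g t).

(** gamma = (g_0 mu_{l_0}) * ... * (g_{n-1} mu_{l_{n-1}}) (Moore composition,
    indices shifted to 0..n-1), with all g_i minimal and l_i > 0 *)
Definition Lsum (ls : nat -> R) (i : nat) : R := \sum_(0 <= j < i) ls j.

Definition minimal_decomp (X : mdspace) (gam : R -> X) (n : nat)
    (gs : nat -> R -> X) (ls : nat -> R) : Prop :=
  (0 < n)%N /\
  (forall i, (i < n)%N -> minimal (gs i) /\ 0 < ls i) /\
  Lsum ls n = 1 /\
  (forall i, (i.+1 < n)%N -> gs i 1 = gs i.+1 0) /\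
  (forall i, (i < n)%N -> forall t, Lsum ls i <= t <= Lsum ls i + ls i ->
     gam t = gs i ((t - Lsum ls i) / ls i)).

End MDSpaces.
Arguments minimal {R} X g.
Arguments minimal_decomp {R} X gam n gs ls.
Arguments morphism {R} X Y h.
Arguments is_mdspace {R} X.
Arguments mstates {R} m _.
Arguments mpaths {R} m _.
Arguments is_colimit_on {R d O} P Xs f Y g.
Arguments cellular_tower {R d O} Xs f X g.
Arguments is_pushout {R A B C D} i phi j psi.

(* Main.v *)
Require Import Defs.
From HB Require Import structures.
From mathcomp Require Import all_boot all_order all_algebra.
From mathcomp Require Import all_classical all_reals all_analysis.
From mathcomp Require Import ring lra zify.
From Stdlib Require Import Eqdep_dec Classical_Prop.
Import Order.TTheory GRing.Theory Num.Theory.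
Import numFieldNormedType.Exports.
Local Open Scope classical_set_scope.
Local Open Scope ring_scope.
Local Open Scope quotient_scope.
Set Implicit Arguments. Unset Strict Implicit. Unset Printing Implicit Defensive.

Definition ibool : Type := bool.
HB.instance Definition _ := Choice.on ibool.
Definition ibn (p : ibool) : set_system ibool := globally setT.
HB.instance Definition _ := hasNbhs.Build ibool ibn.
Lemma ib_filter (p : ibool) : ProperFilter (ibn p).
Proof. exact: (globally_properfilter (A:=setT) (a:=p)). Qed.
Lemma ib_single (p : ibool) (A : set ibool) : ibn p A -> A p.
Proof. by move=> H; apply: H. Qed.
Lemma ib_nbhs (p : ibool) (A : set ibool) : ibn p A -> ibn p (ibn^~ A).
Proof. by move=> H y _ z _; apply: H. Qed.
HB.instance Definition _ := Nbhs_isNbhsTopological.Build ibool ib_filter ib_single ib_nbhs.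
Lemma ib_cont (T : topologicalType) (f : T -> ibool) : continuous f.
Proof. move=> x P /= HP.
have HP' : forall y, P y by move=> y; apply: HP.
rewrite nbhs_simpl /=.
have -> : f @^-1` P = setT by apply/seteqP; split => y //= _; apply: HP'.
exact: filterT.
Qed.

Section Main.
Variable R : realType.

Lemma G11_0 (phi : R -> R) : G11 phi -> phi 0 = 0.
Proof.
case=> _ [Hm [Hmono [psi [_ [Hpsi [_ Hpp]]]]]].
have I0 : I01 (0:R) by rewrite /I01 /= lexx ler01.
have P0 := Hpsi _ I0. have := Hpp _ I0.
have := Hm _ I0; rewrite /I01 /= => /andP [h0 _].
move=> E; apply/eqP; rewrite eq_le h0 andbT -{2}E.
apply: Hmono => //. by case/andP: P0.
Qed.

Lemma G11_1 (phi : R -> R) : G11 phi -> phi 1 = 1.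
Proof.
case=> _ [Hm [Hmono [psi [_ [Hpsi [_ Hpp]]]]]].
have I1 : I01 (1:R) by rewrite /I01 /= lexx ler01.
have P1 := Hpsi _ I1. have := Hpp _ I1.
have := Hm _ I1; rewrite /I01 /= => /andP [_ h1].
move=> E; apply/eqP; rewrite eq_le h1 /= -{1}E.
apply: Hmono => //. by case/andP: P1.
Qed.

Lemma G11_lt (phi : R -> R) s t : G11 phi -> I01 s -> I01 t -> s < t -> phi s < phi t.
Proof.
move=> G Is It st; have [_ [_ [Hmono [psi [_ [_ [Hpp _]]]]]]] := G.
rewrite lt_neqAle Hmono ?(ltW st) // andbT.
apply/negP => /eqP E. have := Hpp _ Is; rewrite E Hpp // => E'.
by move: st; rewrite E' ltxx.
Qed.

Lemma G11_int (phi : R -> R) t : G11 phi -> 0 < t < 1 -> 0 < phi t < 1.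
Proof.
move=> G /andP [t0 t1].
have It : I01 t by rewrite /I01 /= !ltW.
have I0 : I01 (0:R) by rewrite /I01 /= lexx ler01.
have I1 : I01 (1:R) by rewrite /I01 /= lexx ler01.
rewrite -{1}(G11_0 G) -(G11_1 G).
by rewrite !G11_lt.
Qed.

Definition Wb : mdspace R :=
  @MDSpace R ibool [set false] [set g | g 0 = false /\ g 1 = false].

Lemma Wb_mds : is_mdspace Wb.
Proof.
split; [|split; [|split]].
- move=> g [g0 g1]; split; first exact: ib_cont.
  by rewrite /= g0 g1.
- move=> g phi [g0 g1] G; rewrite /= /comp G11_0 // G11_1 //.
- move=> g1 g2 [a0 a1] [b0 b1] _; rewrite /= /ncomp /=.
  rewrite mulr0 ifT ?invr_ge0 ?ler0n // mulr1; split => //.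
  rewrite ifF; first by have -> : (2:R) - 1 = 1 by lra.
  apply/negbTE; rewrite -ltNge invf_lt1 ?ltr0n //.
  by rewrite ltr1n.
- move=> g g' [a0 a1] H; rewrite /= !H ?a0 ?a1 //; rewrite /I01 /= ?lexx ?ler01 //.
Qed.

Lemma to_Wb (X : mdspace R) (h : X -> ibool) :
  (forall g, mpaths X g -> mstates X (g 0) /\ mstates X (g 1)) ->
  (forall x, mstates X x -> h x = false) -> morphism X Wb h.
Proof.
move=> He Hs; split; first exact: ib_cont.
split; first by move=> x /Hs.
by move=> g /He [a b]; rewrite /= /comp !Hs.
Qed.

Lemma mds_ends (X : mdspace R) : is_mdspace X ->
  (forall g, mpaths X g -> mstates X (g 0) /\ mstates X (g 1)).
Proof. by case=> H _ g /H [_ ]. Qed.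

Lemma pushout_paths (A B C D : mdspace R) (i : A -> B) (phi : A -> C)
  (j : C -> D) (psi : B -> D) (Q : set (R -> D)) :
  is_pushout i phi j psi -> is_mdspace (@MDSpace R D (mstates D) Q) ->
  (forall g, Q g -> mpaths D g) ->
  (forall g, mpaths C g -> Q (j \o g)) -> (forall g, mpaths B g -> Q (psi \o g)) ->
  forall g, mpaths D g -> Q g.
Proof.
move=> [HD [mj [mpsi [comm UP]]]] HW HQ Hj Hpsi.
pose W := @MDSpace R D (mstates D) Q.
have mjW : morphism C W j.
  by case: mj => c [s _]; split => //; split.
have mpsiW : morphism B W psi.
  by case: mpsi => c [s _]; split => //; split.
have [w [[mw [wj wpsi]] _]] := UP W j psi HW mjW mpsiW comm.
have [w0 [_ U0]] := UP D j psi HD mj mpsi comm.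
have mwD : morphism D D w.
  by case: mw => c [s p]; split => //; split => // g /p /HQ.
have midD : morphism D D id.
  by split; [move=> x; exact: cvg_id | split => //].
have E1 := U0 _ mwD wj wpsi. have E2 := U0 _ midD erefl erefl.
move=> g Hg; case: mw => _ [_ p].
by have := p g Hg; rewrite E1 -E2.
Qed.

Lemma colim_paths (d : Order.disp_t) (O : orderType d) (P : set O)
  (Xs : O -> mdspace R) (f : forall a b : O, Xs a -> Xs b) (Y : mdspace R)
  (g : forall a : O, Xs a -> Y) (Q : set (R -> Y)) :
  is_colimit_on P Xs f Y g -> is_mdspace (@MDSpace R Y (mstates Y) Q) ->
  (forall h, Q h -> mpaths Y h) ->
  (forall a, P a -> forall h, mpaths (Xs a) h -> Q (g a \o h)) ->
  forall h, mpaths Y h -> Q h.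
Proof.
move=> [HY [mg [comm UP]]] HW HQ Hg.
pose W := @MDSpace R Y (mstates Y) Q.
have mgW : forall a, P a -> morphism (Xs a) W (g a).
  by move=> a Pa; case: (mg a Pa) => c [s _]; split => //; split => // h; apply: Hg.
have [w [[mw wg] _]] := UP W g HW mgW comm.
have [w0 [_ U0]] := UP Y g HY mg comm.
have mwD : morphism Y Y w.
  by case: mw => c [s p]; split => //; split => // h /p /HQ.
have midD : morphism Y Y id.
  by split; [move=> x; exact: cvg_id | split => //].
have E1 := U0 _ mwD wg. have E2 := U0 _ midD (fun _ _ => erefl).
move=> h Hh; case: mw => _ [_ p].
by have := p h Hh; rewrite E1 -E2.
Qed.


Lemma push_ns1 (A B C D : mdspace R) (i : A -> B) (phi : A -> C)
  (j : C -> D) (psi : B -> D) (x : B) :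
  is_pushout i phi j psi ->
  (forall g, mpaths B g -> mstates B (g 0) /\ mstates B (g 1)) ->
  (forall a, i a <> x) -> ~ mstates B x -> ~ mstates D (psi x).
Proof.
move=> [HD [mj [mpsi [comm UP]]]] HeB Hi Hx Hs.
pose u := fun _ : C => (false : ibool).
pose v := fun q : B => (`[< q = x >] : ibool).
have mu : morphism C Wb u.
  split; first exact: ib_cont. by split => // g _; split.
have mv : morphism B Wb v.
  apply: to_Wb => // y Hy; apply/asboolP => E; apply: Hx; by rewrite -E.
have comm' : u \o phi = v \o i.
  apply: funext => a /=; rewrite /u /v; symmetry; apply/asboolP; exact: Hi.
have [w [[mw [_ wpsi]] _]] := UP Wb u v Wb_mds mu mv comm'.
case: mw => _ [ws _]. have := ws _ Hs.
have -> : w (psi x) = v x by rewrite -wpsi.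
by rewrite /v /= asboolT.
Qed.

Lemma push_ns2 (A B C D : mdspace R) (i : A -> B) (phi : A -> C)
  (j : C -> D) (psi : B -> D) (p : C) :
  is_pushout i phi j psi -> injective i ->
  (forall y, mstates B (i y) -> mstates A y) -> morphism A C phi ->
  is_mdspace C ->
  (forall g, mpaths B g -> mstates B (g 0) /\ mstates B (g 1)) ->
  ~ mstates C p -> ~ mstates D (j p).
Proof.
move=> [HD [mj [mpsi [comm UP]]]] ii Hst mphi HC HeB Hp Hs.
pose u := fun c : C => (`[< c = p >] : ibool).
pose v := fun q : B => (`[< exists y, i y = q /\ phi y = p >] : ibool).
have mu : morphism C Wb u.
  apply: to_Wb; first exact: mds_ends.
  move=> y Hy; apply/asboolP => E; apply: Hp; by rewrite -E.
have mv : morphism B Wb v.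
  apply: to_Wb => // q Hq; apply/asboolP => [[y [E1 E2]]].
  apply: Hp; rewrite -E2; case: mphi => _ [ms _]; apply: ms; apply: Hst.
  by rewrite E1.
have comm' : u \o phi = v \o i.
  apply: funext => a /=; rewrite /u /v; apply/idP/idP.
    by move/asboolP => E; apply/asboolP; exists a.
  by move/asboolP => [y [/ii -> E]]; apply/asboolP.
have [w [[mw [wj _]] _]] := UP Wb u v Wb_mds mu mv comm'.
case: mw => _ [ws _]. have := ws _ Hs.
have -> : w (j p) = u p by rewrite -wj.
by rewrite /u /= asboolT.
Qed.

Lemma colim_ns (d : Order.disp_t) (O : orderType d) (P : set O)
  (Xs : O -> mdspace R) (f : forall a b : O, Xs a -> Xs b) (Y : mdspace R)
  (g : forall a : O, Xs a -> Y) (b : O) (p : Xs b) :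
  is_colimit_on P Xs f Y g ->
  (forall a, is_mdspace (Xs a)) ->
  (forall a c, (a <= c)%O -> morphism (Xs a) (Xs c) (f a c)) ->
  (forall a, f a a = id) ->
  (forall a c e, (a <= c)%O -> (c <= e)%O -> f c e \o f a c = f a e) ->
  (forall a c, P a -> P c -> exists e, P e /\ (a <= e)%O /\ (c <= e)%O) ->
  P b ->
  (forall c, P c -> (b <= c)%O -> ~ mstates (Xs c) (f b c p)) ->
  ~ mstates Y (g b p).
Proof.
move=> [HY [mg [comm UP]]] Hmds mf fid fcomp dir Pb Hns Hs.
pose h := fun a => fun y : Xs a =>
  (`[< exists c, P c /\ (a <= c)%O /\ (b <= c)%O /\ f a c y = f b c p >] : ibool).
have mh : forall a, P a -> morphism (Xs a) Wb (h a).
  move=> a Pa; apply: to_Wb; first exact: mds_ends.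
  move=> y Hy; apply/asboolP => [[c [Pc [ac [bc E]]]]].
  apply: (Hns c Pc bc); rewrite -E.
  by case: (mf a c ac) => _ [ms _]; apply: ms.
have fc : forall a c e (z : Xs a), (a <= c)%O -> (c <= e)%O ->
    f c e (f a c z) = f a e z.
  by move=> a c e z h1 h2; rewrite -(fcomp a c e h1 h2).
have hcomm : forall a c, P a -> P c -> (a <= c)%O -> h c \o f a c = h a.
  move=> a c Pa Pc ac; apply: funext => y /=; rewrite /h.
  apply/idP/idP => /asboolP [e [Pe [ce [be E]]]]; apply/asboolP.
    exists e; split => //; split; first exact: le_trans ac ce.
    by split => //; rewrite -E (fc _ _ _ _ ac ce).
  have [e' [Pe' [ee' ce']]] := dir e c Pe Pc.
  exists e'; split => //; split => //; split; first exact: le_trans be ee'.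
  rewrite (fc _ _ _ _ ac ce') -(fc _ _ _ _ ce ee') E.
  by rewrite (fc _ _ _ _ be ee').
have [w [[mw wg] _]] := UP Wb h Wb_mds mh hcomm.
case: mw => _ [ws _]. have := ws _ Hs.
have -> : w (g b p) = h b p by rewrite -(wg b Pb).
rewrite /h /= asboolT //; exists b; split => //; split => //; split => //; by rewrite fid.
Qed.

End Main.

Section G.
Variable R : realType.

Lemma pi_eq (Z : topologicalType) (x y : glob_pre R Z) :
  \pi_(glob R Z) x = \pi_(glob R Z) y <-> glob_key x = glob_key y.
Proof.
split.
  by move/eqquotP => /asboolP.
by move=> E; apply/eqquotP; apply/asboolP.
Qed.

Lemma repr_key (Z : topologicalType) (x : glob_pre R Z) :
  glob_key (repr (\pi_(glob R Z) x)) = glob_key x.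
Proof. by apply/pi_eq; rewrite reprK. Qed.

Definition Fk (Z Z' : topologicalType) (h : Z -> Z') (k : bool + glob_pre R Z) :
  bool + glob_pre R Z' :=
  match k with inl b => inl b | inr w => inr (glob_pre_map h w) end.

Lemma key_map (Z Z' : topologicalType) (h : Z -> Z') (x : glob_pre R Z) :
  glob_key (glob_pre_map h x) = Fk h (glob_key x).
Proof.
case: x => [[] y] //=.
case: y => z t /=.
by case: ifP => _ //; case: ifP.
Qed.

Lemma glob_map_pi (Z Z' : topologicalType) (h : Z -> Z') (x : glob_pre R Z) :
  glob_map h (\pi_(glob R Z) x) = \pi_(glob R Z') (glob_pre_map h x).
Proof.
rewrite /glob_map; apply/pi_eq.
by rewrite !key_map repr_key.
Qed.

Lemma pre_map_inj (Z Z' : topologicalType) (h : Z -> Z') :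
  injective h -> injective (glob_pre_map (R:=R) h).
Proof.
move=> ih [[] y1] [[] y2] //= E.
- by have := inj_pair2_eq_dec _ Bool.bool_dec _ _ _ _ E => ->.
- have := inj_pair2_eq_dec _ Bool.bool_dec _ _ _ _ E.
  case: y1 {E} => z1 t1; case: y2 => z2 t2 /= [/ih -> ->] //.
Qed.

Lemma glob_map_inj (Z Z' : topologicalType) (h : Z -> Z') :
  injective h -> injective (glob_map (R:=R) h).
Proof.
move=> ih q1 q2; rewrite /glob_map => /pi_eq; rewrite !key_map.
move=> E; rewrite -(reprK q1) -(reprK q2); apply/pi_eq.
move: E; case: (glob_key (repr q1)) => [a|a]; case: (glob_key (repr q2)) => [b|b] //=.
- by case=> ->.
- by case=> /(pre_map_inj ih) ->.
Qed.

Lemma to01_val (t : R) : I01 t -> sval (to01 t) = t.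
Proof. by rewrite /to01; case: pselect. Qed.

Lemma glob_cyl0 (Z : topologicalType) (z : Z) : glob_cyl z 0 = glob_pt R Z false.
Proof.
apply/pi_eq => /=. rewrite to01_val ?eqxx //.
by rewrite /I01 /= lexx ler01.
Qed.

Lemma glob_cyl1 (Z : topologicalType) (z : Z) : glob_cyl z 1 = glob_pt R Z true.
Proof.
apply/pi_eq => /=. rewrite to01_val; last by rewrite /I01 /= lexx ler01.
by rewrite oner_eq0 eqxx.
Qed.

Lemma glob_cyl_key (Z : topologicalType) (z : Z) (t : R) : 0 < t < 1 ->
  glob_key (existT (glob_fam R Z) false (z, to01 t)) =
  inr (existT (glob_fam R Z) false (z, to01 t)).
Proof.
move=> /andP [t0 t1] /=; rewrite to01_val; last by rewrite /I01 /= !ltW.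
by rewrite gt_eqF // lt_eqF.
Qed.

Lemma glob_cyl_nst (Z : topologicalType) (z : Z) (t : R) : 0 < t < 1 ->
  ~ mstates (Glob R Z) (glob_cyl z t).
Proof.
move=> tt [b /pi_eq]. by rewrite glob_cyl_key.
Qed.

Lemma cell_incl_pt n b : cell_incl (glob_pt R (Sph R n) b) = glob_pt R (Dsk R n) b.
Proof. by rewrite /cell_incl /glob_pt glob_map_pi. Qed.

Lemma cell_incl_cyl n (z : Sph R n) t :
  cell_incl (glob_cyl z t) = glob_cyl (sph_to_dsk z) t.
Proof. by rewrite /cell_incl /glob_cyl glob_map_pi. Qed.

Lemma sph_to_dsk_inj n : injective (@sph_to_dsk R n).
Proof. by move=> [x hx] [y hy] /= [E]; apply/val_inj => /=. Qed.

Lemma cell_incl_inj n : injective (@cell_incl R n).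
Proof. exact/glob_map_inj/sph_to_dsk_inj. Qed.

Lemma cell_incl_st n y : mstates (Glob R (Dsk R n)) (cell_incl y) ->
  mstates (Glob R (Sph R n)) y.
Proof.
move=> [b E]; exists b; apply: (@cell_incl_inj n).
by rewrite E cell_incl_pt.
Qed.

Lemma cell_incl_notin n (z : Dsk R n) t :
  \sum_(i < n) (sval z) ord0 i ^+ 2 < 1 -> 0 < t < 1 ->
  forall a, cell_incl a <> glob_cyl z t.
Proof.
move=> Hz tt a; rewrite -(reprK a) /cell_incl /glob_cyl glob_map_pi => /pi_eq.
rewrite key_map glob_cyl_key //.
case: (repr a) => [[] y] //=.
case: y => z' s /=; case: ifP => // _; case: ifP => // _ H; rewrite /Fk /glob_pre_map /= in H.
have /= E := congr1 (fun k : bool + glob_pre R (Dsk R n) => match k with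
  | inr (existT b y) => (match b return glob_fam R (Dsk R n) b -> 'rV[R]_n with
       true => fun _ => 0 | false => fun y => sval y.1 end) y
  | inl _ => 0 end) H.
move: Hz; rewrite -E /=.
have := set_mem (svalP z'); rewrite /sphere /= => ->.
by rewrite ltxx.
Qed.

Lemma dsk_sph n (z : Dsk R n) : \sum_(i < n) (sval z) ord0 i ^+ 2 = 1 ->
  exists z' : Sph R n, sph_to_dsk z' = z.
Proof.
move=> H.
have H' : sval z \in @sphere R n by apply/mem_set.
exists (exist _ (sval z) H'). by apply/val_inj.
Qed.

End G.

Section C.
Variable R : realType.

Lemma aff_cont (a b : R) : continuous (fun s : R => a + s * b).
Proof.
move=> x; apply: (@cvgD _ _ _ _ _ (fun _ => a) (fun s => s * b)).
  exact: cvg_cst.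
exact: (@cvgMl _ _ _ _ id x b cvg_id).
Qed.

Lemma aff2_cont (c e : R) : continuous (fun y : R => (y - c) / e).
Proof.
move=> x; apply: (@cvgMl _ _ _ _ (fun y => y - c)).
apply: (@cvgD _ _ _ _ _ id (fun _ => - c)); [exact: cvg_id | exact: cvg_cst].
Qed.

Lemma within_post (f : R -> R) (c e : R) : {within (@I01 R), continuous f} ->
  {within (@I01 R), continuous (fun s => (f s - c) / e)}.
Proof.
move=> hf x.
apply: (@continuous_comp _ _ _ (from_subspace (@I01 R) f) (fun y => (y - c) / e)).
  exact: hf.
exact: aff2_cont.
Qed.

Lemma within_pre (f : R -> R) (a b : R) : {within (@I01 R), continuous f} ->
  (forall s, I01 s -> I01 (a + s * b)) ->
  {within (@I01 R), continuous (fun s => f (a + s * b))}.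
Proof.
move=> /subspace_continuousP hf hA; apply/subspace_continuousP => x Ix.
apply: (@cvg_comp _ _ _ (fun s => a + s * b) f _ (within (@I01 R) (nbhs (a + x * b)))); last exact: hf _ (hA _ Ix).
move=> W /= HW.
have := @aff_cont a b x (fun z => I01 z -> W z) HW.
rewrite /within /= !nbhs_simpl /=.
move=> H; apply: filterS H => s /= H Is.
exact: H (hA _ Is).
Qed.

Lemma div01 (y L l : R) : L <= y <= L + l -> 0 < l -> I01 ((y - L) / l).
Proof.
move=> /andP [h1 h2] hl; rewrite /I01 /= divr_ge0 ?subr_ge0 ?(ltW hl) //=.
by rewrite ler_pdivrMr // mul1r lerBlDl.
Qed.

Lemma I01_aff (M l' s : R) : 0 <= M -> M + l' <= 1 -> 0 < l' -> I01 s -> I01 (M + s * l').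
Proof.
move=> h1 h2 h3; rewrite /I01 /= => /andP [s0 s1].
apply/andP; split; nra.
Qed.

Lemma aff_mono (M l' s t : R) : 0 < l' -> s <= t -> M + s * l' <= M + t * l'.
Proof. move=> h st; rewrite lerD2l ler_pM2r //. Qed.

Lemma G11_sub (phi psi : R -> R) (L l : R) :
  {within (@I01 R), continuous phi} -> {within (@I01 R), continuous psi} ->
  (forall t, I01 t -> I01 (phi t)) -> (forall t, I01 t -> I01 (psi t)) ->
  (forall s t, I01 s -> I01 t -> s <= t -> phi s <= phi t) ->
  (forall s t, I01 s -> I01 t -> s <= t -> psi s <= psi t) ->
  (forall t, I01 t -> psi (phi t) = t) -> (forall t, I01 t -> phi (psi t) = t) ->
  I01 L -> I01 (L + l) -> 0 < l -> 0 < psi (L + l) - psi L ->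
  G11 (fun s => (phi (psi L + s * (psi (L + l) - psi L)) - L) / l).
Proof.
move=> cphi cpsi mphi mpsi phim psim psiphi phipsi IL ILl hl hl'.
set M := psi L; set l' := psi (L + l) - psi L.
have M0 : 0 <= M by have := mpsi _ IL; case/andP.
have Ml1 : M + l' <= 1.
  rewrite /l' /M addrC subrK; by have := mpsi _ ILl; case/andP.
have IA : forall s, I01 s -> I01 (M + s * l') by move=> s; apply: I01_aff.
have L0 : 0 <= L by case/andP: IL.
have Ll1 : L + l <= 1 by case/andP: ILl.
have IB : forall u, I01 u -> I01 (L + u * l) by move=> u; apply: I01_aff.
have I0 : I01 (0:R) by rewrite /I01 /= lexx ler01.
have I1 : I01 (1:R) by rewrite /I01 /= lexx ler01.
have phiM : phi M = L by rewrite /M phipsi.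
have phiMl : phi (M + l') = L + l by rewrite /l' /M addrC subrK phipsi.
have IM : I01 M by apply: mpsi.
have IMl : I01 (M + l') by rewrite /l' /M addrC subrK; apply: mpsi.
have ILu : forall u, I01 u -> L <= L + u * l.
  by move=> u /andP [u0 _]; rewrite lerDl mulr_ge0 // ltW.
have ILu' : forall u, I01 u -> L + u * l <= L + l.
  by move=> u /andP [_ u1]; rewrite lerD2l ger_pMl.
have IMu : forall u, I01 u -> M <= M + u * l'.
  by move=> u /andP [u0 _]; rewrite lerDl mulr_ge0 // ltW.
have IMu' : forall u, I01 u -> M + u * l' <= M + l'.
  by move=> u /andP [_ u1]; rewrite lerD2l ger_pMl.
split; first exact: within_post (within_pre cphi IA).
split.
  move=> s Is; apply: div01 => //; apply/andP; split.
    rewrite -{1}phiM; apply: phim; by [|apply: IA|apply: IMu].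
  rewrite -phiMl; apply: phim; by [|apply: IA|apply: IMu'].
split.
  move=> s t Is It st; rewrite ler_pM2r ?invr_gt0 // lerD2r.
  by apply: phim; try apply: IA; rewrite // aff_mono.
exists (fun u => (psi (L + u * l) - M) / l').
split; first exact: within_post (within_pre cpsi IB).
split.
  move=> u Iu; apply: div01 => //; apply/andP; split.
    rewrite /M; apply: psim; by [|apply: IB|apply: ILu].
  rewrite /l' /M (addrC (psi L)) subrK; apply: psim; by [|apply: IB|apply: ILu'].
split.
  move=> s Is /=.
  have E : L + (phi (M + s * l') - L) / l * l = phi (M + s * l').
    by field; rewrite gt_eqF.
  rewrite E psiphi; last exact: IA. by field; rewrite gt_eqF.
move=> u Iu /=.
have E : M + (psi (L + u * l) - M) / l' * l' = psi (L + u * l).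
  by field; rewrite gt_eqF.
rewrite E phipsi; last exact: IB. by field; rewrite gt_eqF.
Qed.
End C.

Section D.
Variable R : realType.

Lemma Lsum0 (ls : nat -> R) : Lsum ls 0 = 0.
Proof. by rewrite /Lsum big_geq. Qed.

Lemma LsumS (ls : nat -> R) i : Lsum ls i.+1 = Lsum ls i + ls i.
Proof. by rewrite /Lsum big_nat_recr. Qed.

Lemma Lsum_mono (ls : nat -> R) n i k : (forall j, (j < n)%N -> 0 < ls j) ->
  (i <= k)%N -> (k <= n)%N -> Lsum ls i <= Lsum ls k.
Proof.
move=> hp ik kn; elim: k ik kn => [|k IH] ik kn.
  by move: ik; rewrite leqn0 => /eqP ->.
move: ik; rewrite leq_eqVlt => /orP [/eqP -> //|].
rewrite ltnS => ik; rewrite LsumS (le_trans (IH ik (ltnW kn))) //.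
by rewrite lerDl ltW // hp.
Qed.

Lemma Lsum_strict (ls : nat -> R) n i k : (forall j, (j < n)%N -> 0 < ls j) ->
  (i < k)%N -> (k <= n)%N -> Lsum ls i < Lsum ls k.
Proof.
move=> hp ik kn; case: k ik kn => // k ik kn.
rewrite LsumS (le_lt_trans (Lsum_mono hp _ (ltnW kn))) //.
by rewrite ltrDl hp.
Qed.

Lemma Lsum_ge0 (ls : nat -> R) n i : (forall j, (j < n)%N -> 0 < ls j) ->
  (i <= n)%N -> 0 <= Lsum ls i.
Proof. by move=> hp hi; rewrite -(Lsum0 ls) (Lsum_mono hp). Qed.

Lemma Lsum_tele (ls f : nat -> R) : (forall i, ls i = f i.+1 - f i) ->
  forall i, Lsum ls i = f i - f 0%N.
Proof.
move=> h; elim=> [|i IH]; first by rewrite Lsum0 subrr.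
by rewrite LsumS IH h; ring.
Qed.

Variable X : mdspace R.
Hypothesis HX : is_mdspace X.

Lemma dec_I01 g n gs ls : minimal_decomp X g n gs ls -> forall i, (i < n)%N ->
  I01 (Lsum ls i) /\ I01 (Lsum ls i + ls i).
Proof.
move=> [n0 [hm [h1 _]]] i hi.
have hp : forall j, (j < n)%N -> 0 < ls j by move=> j /hm [].
have a := Lsum_ge0 hp (ltnW hi).
have b : Lsum ls i.+1 <= 1 by rewrite -h1 (Lsum_mono hp).
rewrite -LsumS /I01 /= a b (le_trans _ b) /= ?(Lsum_mono hp (leqnSn _)) //.
by rewrite (Lsum_ge0 hp hi).
Qed.

Lemma dec_ext g g' n gs ls : minimal_decomp X g n gs ls ->
  (forall t, I01 t -> g' t = g t) -> minimal_decomp X g' n gs ls.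
Proof.
move=> D E; have D' := D; case: D' => [n0 [hm [h1 [hc hv]]]].
do 4 (split => //).
move=> i hi t ht; rewrite E; first exact: hv.
have [/andP [a _] /andP [_ b]] := dec_I01 D hi; case/andP: ht => t1 t2.
apply/andP; split; [exact: le_trans a t1 | exact: le_trans t2 b].
Qed.

End D.

Section D2.
Variable R : realType.
Variable X : mdspace R.
Hypothesis HX : is_mdspace X.

Lemma dec_reparam g n gs ls phi : minimal_decomp X g n gs ls -> G11 phi ->
  exists gs' ls', minimal_decomp X (g \o phi) n gs' ls'.
Proof.
move=> D G; have D' := D; case: D' => [n0 [hm [h1 [hc hv]]]].
have G' := G; case: G' => cphi [mphi [phim [psi [cpsi [mpsi [psiphi phipsi]]]]]].
have I0 : I01 (0:R) by rewrite /I01 /= lexx ler01.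
have I1 : I01 (1:R) by rewrite /I01 /= lexx ler01.
have psi0 : psi 0 = 0 by rewrite -{1}(G11_0 G) psiphi.
have psi1 : psi 1 = 1 by rewrite -{1}(G11_1 G) psiphi.
have psim : forall s t, I01 s -> I01 t -> s <= t -> psi s <= psi t.
  move=> s t Is It st; rewrite leNgt; apply/negP => lt.
  have := phim _ _ (mpsi _ It) (mpsi _ Is) (ltW lt); rewrite !phipsi // => ts.
  have E : s = t by apply/eqP; rewrite eq_le st ts.
  by move: lt; rewrite E ltxx.
have psis : forall s t, I01 s -> I01 t -> s < t -> psi s < psi t.
  move=> s t Is It st; rewrite lt_neqAle psim ?(ltW st) // andbT.
  apply/negP => /eqP E; have := phipsi _ Is; rewrite E phipsi // => E'.
  by move: st; rewrite E' ltxx.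
have hp : forall j, (j < n)%N -> 0 < ls j by move=> j /hm [].
pose L i := Lsum ls i.
pose ls' i := psi (L i + ls i) - psi (L i).
pose th i := fun s => (phi (psi (L i) + s * ls' i) - L i) / ls i.
exists (fun i => gs i \o th i), ls'.
have Ls' : forall i, Lsum ls' i = psi (L i).
  move=> i; rewrite (@Lsum_tele _ _ (fun i => psi (L i))).
    by rewrite /L Lsum0 psi0 subr0.
  by move=> j; rewrite /ls' /L LsumS.
have lpos : forall i, (i < n)%N -> 0 < ls' i.
  move=> i hi; have [a b] := dec_I01 D hi; rewrite subr_gt0 psis //.
  by rewrite ltrDl hp.
have thG : forall i, (i < n)%N -> G11 (th i).
  move=> i hi; have [a b] := dec_I01 D hi.
  exact: (G11_sub cphi cpsi mphi mpsi phim psim psiphi phipsi a b (hp i hi) (lpos i hi)).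
split => //; split.
  move=> i hi; split; last exact: lpos.
  have [[mg mint] _] := hm i hi.
  split; first by case: HX => _ [hr _]; apply: hr; [exact: mg | exact: thG].
  move=> t tt /=; apply: mint; exact: G11_int (thG i hi) tt.
split; first by rewrite Ls' /L h1 psi1.
split.
  move=> i hi /=; rewrite (G11_1 (thG i (ltnW hi))) (G11_0 (thG i.+1 hi)).
  exact: hc.
move=> i hi t; rewrite Ls' => /andP [t1 t2] /=.
have [a b] := dec_I01 D hi.
have It : I01 t.
  apply/andP; split; first by apply: le_trans t1; case/andP: (mpsi _ a).
  by apply: (le_trans t2); rewrite /ls' (addrC (psi (L i))) subrK; case/andP: (mpsi _ b).
rewrite /th.
have -> : psi (L i) + (t - psi (L i)) / ls' i * ls' i = t.
  by field; rewrite gt_eqF // lpos.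
apply: hv => //; apply/andP; split.
  by rewrite -{1}(phipsi _ a); apply: phim => //; apply: mpsi.
rewrite -{1}(phipsi _ b); apply: phim => //; first by apply: mpsi.
by move: t2; rewrite /ls' (addrC (psi (L i))) subrK.
Qed.

End D2.

Section D3.
Variable R : realType.
Variable X : mdspace R.

Lemma dec_val1 g n gs ls : minimal_decomp X g n gs ls -> g 1 = gs n.-1 1.
Proof.
move=> [n0 [hm [h1 [hc hv]]]].
have hi : (n.-1 < n)%N by rewrite prednK.
have E : Lsum ls n.-1 + ls n.-1 = 1 by rewrite -LsumS prednK.
have lp : 0 < ls n.-1 by case: (hm _ hi).
have := hv _ hi (Lsum ls n.-1 + ls n.-1).
rewrite (_ : (Lsum ls n.-1 + ls n.-1 - Lsum ls n.-1) / ls n.-1 = 1); last first.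
  by field; rewrite gt_eqF.
rewrite E; apply.
by rewrite -E lexx andbT lerDl ltW.
Qed.

Lemma dec_val0 g n gs ls : minimal_decomp X g n gs ls -> g 0 = gs 0%N 0.
Proof.
move=> [n0 [hm [h1 [hc hv]]]].
have := hv _ n0 0; rewrite Lsum0 subrr mul0r; apply.
by rewrite lexx /= add0r ltW //; case: (hm _ n0).
Qed.

Lemma dec_ncomp g1 g2 n1 gs1 ls1 n2 gs2 ls2 :
  minimal_decomp X g1 n1 gs1 ls1 -> minimal_decomp X g2 n2 gs2 ls2 ->
  g1 1 = g2 0 ->
  exists n gs ls, minimal_decomp X (ncomp g1 g2) n gs ls.
Proof.
move=> D1 D2 E12.
have D1' := D1; have D2' := D2.
case: D1' => [n10 [hm1 [h11 [hc1 hv1]]]]; case: D2' => [n20 [hm2 [h12 [hc2 hv2]]]].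
pose gs i := if (i < n1)%N then gs1 i else gs2 (i - n1)%N.
pose ls i := if (i < n1)%N then ls1 i / 2 else ls2 (i - n1)%N / 2.
have L1 : forall i, (i <= n1)%N -> Lsum ls i = Lsum ls1 i / 2.
  elim=> [|i IH] hi; first by rewrite !Lsum0 mul0r.
  by rewrite !LsumS IH ?(ltnW hi) // /ls hi mulrDl.
have L2 : forall k, Lsum ls (n1 + k) = 2^-1 + Lsum ls2 k / 2.
  elim=> [|k IH]; first by rewrite addn0 L1 // h11 Lsum0; field.
  rewrite addnS !LsumS IH /ls ifF; last by apply/negbTE; rewrite -leqNgt leq_addr.
  by rewrite addKn; field.
exists (n1 + n2)%N; exists gs; exists ls.
split; first by rewrite addn_gt0 n10.
split.
  move=> i hi; rewrite /gs /ls; case: ifP => h.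
    by have [? ?] := hm1 _ h; split => //; rewrite divr_gt0.
  have h' : (i - n1 < n2)%N by rewrite ltn_subLR // leqNgt h.
  by have [? ?] := hm2 _ h'; split => //; rewrite divr_gt0.
split; first by rewrite L2 h12; field.
split.
  move=> i hi; rewrite /gs.
  case: (ltnP i.+1 n1) => h.
    by rewrite (ltnW h); apply: hc1.
  case: (ltnP i n1) => h'.
    have ei : i.+1 = n1 by apply/eqP; rewrite eqn_leq h' h.
    rewrite ei subnn.
    have -> : i = n1.-1 by rewrite -ei.
    by rewrite -(dec_val1 D1) E12 (dec_val0 D2).
  rewrite subSn //; apply: hc2; lia.
move=> i hi t; rewrite /gs /ls /ncomp.
case: (ltnP i n1) => h.
  rewrite L1 ?(ltnW h) // => /andP [t1 t2].
  have [_ /andP [_ b]] := dec_I01 D1 h.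
  have lp : 0 < ls1 i by case: (hm1 _ h).
  rewrite ifT; last by lra.
  have -> : (t - Lsum ls1 i / 2) / (ls1 i / 2) = (2 * t - Lsum ls1 i) / ls1 i.
    by field; rewrite gt_eqF.
  apply: hv1 => //; apply/andP; split.
    by lra.
  by lra.
have ei : i = (n1 + (i - n1))%N by rewrite subnKC.
rewrite ei L2 addKn => /andP [t1 t2].
set k := (i - n1)%N.
have hk : (k < n2)%N by rewrite /k ltn_subLR.
have lp : 0 < ls2 k by case: (hm2 _ hk).
have L0 : 0 <= Lsum ls2 k by apply: Lsum_ge0 (ltnW hk); move=> j /hm2 [].
have th : 2^-1 <= t by apply: le_trans t1; rewrite lerDl divr_ge0.
have -> : (if t <= 2^-1 then g1 (2 * t) else g2 (2 * t - 1)) = g2 (2 * t - 1).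
  case: ifP => // h2.
  have -> : t = 2^-1 by apply/eqP; rewrite eq_le h2 th.
  by rewrite divff // subrr.
have -> : (t - (2^-1 + Lsum ls2 k / 2)) / (ls2 k / 2) = (2 * t - 1 - Lsum ls2 k) / ls2 k.
  by field; rewrite gt_eqF.
apply: hv2 => //; apply/andP; split.
  by move: t1; lra.
by move: t2; lra.
Qed.
End D3.

Section D4.
Variable R : realType.

Definition Pd (X : mdspace R) : set (R -> X) :=
  [set g | mpaths X g /\ exists n gs ls, minimal_decomp X g n gs ls].

Definition PdS (X : mdspace R) : mdspace R := @MDSpace R X (mstates X) (@Pd X).

Lemma Pd_mds (X : mdspace R) : is_mdspace X -> is_mdspace (PdS X).
Proof.
move=> HX; have HX' := HX; case: HX' => [he [hr [hn hx]]].
split; first by move=> g [/he].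
split.
  move=> g phi [hg [n [gs [ls D]]]] G; split; first exact: hr.
  have [gs' [ls' D']] := dec_reparam HX D G.
  by exists n, gs', ls'.
split.
  move=> g1 g2 [h1 [n1 [gs1 [ls1 D1]]]] [h2 [n2 [gs2 [ls2 D2]]]] E.
  split; first exact: hn.
  exact: dec_ncomp D1 D2 E.
move=> g g' [hg [n [gs [ls D]]]] E; split; first exact: hx E.
by exists n, gs, ls; apply: dec_ext D E.
Qed.
End D4.

Section U.
Variable R : realType.
Variable X : mdspace R.
Hypothesis HX : is_mdspace X.

Lemma dec_bp g n gs ls i : minimal_decomp X g n gs ls -> (i < n)%N ->
  mstates X (g (Lsum ls i)).
Proof.
move=> D hi; have D' := D; case: D' => [n0 [hm [h1 [hc hv]]]].
have [mg _] := (hm i hi).1.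
have lp : 0 < ls i by case: (hm i hi).
rewrite (hv i hi) ?subrr ?mul0r; last by rewrite lexx lerDl ltW.
by have [] := mds_ends HX mg.
Qed.

Lemma dec_int g n gs ls i t : minimal_decomp X g n gs ls -> (i < n)%N ->
  Lsum ls i < t < Lsum ls i + ls i -> ~ mstates X (g t).
Proof.
move=> D hi /andP [t1 t2]; have D' := D; case: D' => [n0 [hm [h1 [hc hv]]]].
have [[mg mi] lp] := hm i hi.
rewrite (hv i hi); last by rewrite !ltW.
apply: mi; apply/andP; split.
  by rewrite divr_gt0 // subr_gt0.
by rewrite ltr_pdivrMr // mul1r ltrBlDl.
Qed.

Lemma dec_lt1 g n gs ls i : minimal_decomp X g n gs ls -> (i < n)%N ->
  Lsum ls i < 1.
Proof.
move=> [n0 [hm [h1 _]]] hi; rewrite -h1; apply: (Lsum_strict (n:=n)) => //.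
by move=> j /hm [].
Qed.

Lemma dec_step g n gs ls n' gs' ls' i :
  minimal_decomp X g n gs ls -> minimal_decomp X g n' gs' ls' ->
  (i < n)%N -> (i < n')%N -> Lsum ls i = Lsum ls' i ->
  ~ (Lsum ls i.+1 < Lsum ls' i.+1).
Proof.
move=> D D' hi hi' E lt.
have D1 := D; case: D1 => [n0 [hm [h1 _]]].
have hp : forall j, (j < n)%N -> 0 < ls j by move=> j /hm [].
have hn : (i.+1 < n)%N.
  rewrite ltn_neqAle hi andbT; apply/negP => /eqP e.
  have D2 := D'; case: D2 => [_ [hm' [h1' _]]].
  have l1 : Lsum ls' i.+1 <= 1.
    rewrite -h1'; apply: (Lsum_mono (n:=n')) => //; by move=> j /hm' [].
  by move: lt l1; rewrite e h1 => /lt_le_trans H /H; rewrite ltxx.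
apply: (dec_int D' hi' (t := Lsum ls i.+1)); last exact: dec_bp D hn.
rewrite -LsumS lt andbT -E; apply: (Lsum_strict (n:=n)) => //.
Qed.

Lemma dec_unique g n gs ls n' gs' ls' :
  minimal_decomp X g n gs ls -> minimal_decomp X g n' gs' ls' ->
  n' = n /\ forall i, (i < n)%N ->
    (forall t, I01 t -> gs' i t = gs i t) /\ ls' i = ls i.
Proof.
move=> D D'.
have D1 := D; case: D1 => [n0 [hm [h1 [hc hv]]]].
have D2 := D'; case: D2 => [n0' [hm' [h1' [hc' hv']]]].
have EL : forall i, (i <= n)%N -> (i <= n')%N -> Lsum ls i = Lsum ls' i.
  elim=> [|i IH] hi hi'; first by rewrite !Lsum0.
  have e := IH (ltnW hi) (ltnW hi').
  case: (ltgtP (Lsum ls i.+1) (Lsum ls' i.+1)) => // lt.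
    by case: (dec_step D D' hi hi' e lt).
  by case: (dec_step D' D hi' hi (esym e) lt).
have En : n' = n.
  case: (ltngtP n' n) => // lt.
    have := dec_lt1 D lt; rewrite EL ?(ltnW lt) // h1'.
    by rewrite ltxx.
  have := dec_lt1 D' lt; rewrite -EL ?(ltnW lt) // h1.
  by rewrite ltxx.
split => // i hi.
have hi' : (i < n')%N by rewrite En.
have el : ls' i = ls i.
  have := EL i.+1 hi hi'; rewrite !LsumS EL ?(ltnW hi) ?(ltnW hi') //.
  by move/addrI.
split => // t It.
have [[_ _] lp] := hm i hi.
have [/andP [t0 t1]] := (It : I01 t).
have Ht : Lsum ls i <= Lsum ls i + t * ls i <= Lsum ls i + ls i.
  by apply/andP; split; [rewrite lerDl mulr_ge0 // ltW | rewrite lerD2l ger_pMl].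
have := hv i hi _ Ht; have := hv' i hi' (Lsum ls i + t * ls i).
rewrite -EL ?(ltnW hi) ?(ltnW hi') // el => h2 h3.
have e2 : (Lsum ls i + t * ls i - Lsum ls i) / ls i = t by field; rewrite gt_eqF.
by rewrite -e2 -h2 // -h3.
Qed.
End U.

Section T.
Variable R : realType.

Lemma glob_ends (Z : topologicalType) (g : R -> Glob R Z) :
  mpaths (Glob R Z) g -> mstates (Glob R Z) (g 0) /\ mstates (Glob R Z) (g 1).
Proof.
have I0 : I01 (0:R) by rewrite /I01 /= lexx ler01.
have I1 : I01 (1:R) by rewrite /I01 /= lexx ler01.
move=> [z [phi [G E]]].
rewrite !E // (G11_0 G) (G11_1 G) glob_cyl0 glob_cyl1.
by split; [exists false | exists true].
Qed.

Lemma Pd_min (Y : mdspace R) (g : R -> Y) : mpaths Y g ->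
  (forall t, 0 < t < 1 -> ~ mstates Y (g t)) -> Pd g.
Proof.
move=> hg hi; split => //.
exists 1%N, (fun _ => g), (fun _ => 1).
split => //; split.
  by move=> i _; split => //; split.
split; first by rewrite LsumS Lsum0 add0r.
split => //.
move=> i; rewrite ltnS leqn0 => /eqP -> t _.
by rewrite Lsum0 subr0 divr1.
Qed.

Lemma pull_mds (Y X : mdspace R) (k : Y -> X) : is_mdspace Y -> is_mdspace X ->
  is_mdspace (@MDSpace R Y (mstates Y) [set h | mpaths Y h /\ Pd (k \o h)]).
Proof.
move=> HY HX; have HY' := HY; case: HY' => [he [hr [hn hx]]].
have [_ [pr [pn px]]] := Pd_mds HX.
split; first by move=> h [/he].
split; first by move=> h phi [h1 h2] G; split; [exact: hr | exact: (pr (k \o h) phi h2 G)].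
split.
  move=> h1 h2 [a1 b1] [a2 b2] E; split; first exact: hn.
  have -> : k \o ncomp h1 h2 = ncomp (k \o h1) (k \o h2).
    by apply: funext => t; rewrite /ncomp /=; case: ifP.
  by apply: pn => //=; rewrite E.
move=> h h' [a b] E; split; first exact: hx E.
by apply: (px _ _ b) => t It /=; rewrite E.
Qed.

Lemma trich (d : Order.disp_t) (O : orderType d) (c : O) :
  is_least c \/ (exists a, is_succ a c) \/ is_limit c.
Proof.
case: (Classical_Prop.classic (is_least c)) => hl; first by left.
case: (Classical_Prop.classic (exists a, is_succ a c)) => hs; first by right; left.
by right; right; split => // a ha; apply: hs; exists a.
Qed.

End T.

Section M.
Unset Implicit Arguments.
Variable R : realType.
Variable X : mdspace R.
Variables (d : Order.disp_t) (O : orderType d) (Xs : O -> mdspace R)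
  (f : forall a b : O, Xs a -> Xs b) (g : forall a : O, Xs a -> X).
Hypothesis Ht : cellular_tower Xs f X g.
Set Implicit Arguments.

Lemma NS b0 b n (phi : Glob R (Sph R n) -> Xs b0) (psi : Glob R (Dsk R n) -> Xs b)
  (z : Dsk R n) (s : R) :
  is_pushout (@cell_incl R n) phi (f b0 b) psi ->
  \sum_(i < n) (sval z) ord0 i ^+ 2 < 1 -> 0 < s < 1 ->
  forall c, (b <= c)%O -> ~ mstates (Xs c) (f b c (psi (glob_cyl z s))).
Proof.
case: Ht => [wf [Hmds [Hmor [Hid [Hcomp [Hleast [Hsucc [Hlim Hcol]]]]]]]].
move=> po hz hs; apply: (well_founded_ind wf) => c IH.
rewrite le_eqVlt => /orP [/eqP E|lt].
  subst c; rewrite Hid.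
  apply: (push_ns1 po (@glob_ends _ _)).
    exact: cell_incl_notin.
  exact: glob_cyl_nst.
case: (trich c) => [hl | [[a ha] | hlim]].
- by case: (hl b).
- have hba : (b <= a)%O.
    rewrite leNgt; apply/negP => ab; case: ha => _ H; exact: H b (conj ab lt).
  have [n' [phi' [psi' [mphi' po']]]] := Hsucc a c ha.
  rewrite -(Hcomp b a c hba (ltW ha.1)) /=.
  apply: (push_ns2 po' (@cell_incl_inj R n') (@cell_incl_st R n') mphi' (Hmds a)
    (@glob_ends _ _)).
  exact: IH a ha.1 hba.
- apply: (colim_ns (Hlim c hlim) Hmds Hmor Hid Hcomp).
  + move=> a a' ha ha'; case/orP: (le_total a a') => h; [exists a' | exists a] => //.
  + exact: lt.
  + move=> c' hc' hbc'; exact: IH c' hc' hbc'.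
Qed.

Lemma NSX b0 b n (phi : Glob R (Sph R n) -> Xs b0) (psi : Glob R (Dsk R n) -> Xs b)
  (z : Dsk R n) (s : R) :
  is_pushout (@cell_incl R n) phi (f b0 b) psi ->
  \sum_(i < n) (sval z) ord0 i ^+ 2 < 1 -> 0 < s < 1 ->
  ~ mstates X (g b (psi (glob_cyl z s))).
Proof.
move=> po hz hs.
have Ht' := Ht; case: Ht' => [wf [Hmds [Hmor [Hid [Hcomp [Hleast [Hsucc [Hlim Hcol]]]]]]]].
apply: (colim_ns Hcol Hmds Hmor Hid Hcomp) => //.
  by move=> a a' _ _; case/orP: (le_total a a') => h; [exists a' | exists a].
move=> c _ hc; exact: (NS po hz hs hc).
Qed.

Lemma PL : forall a (h : R -> Xs a), mpaths (Xs a) h -> Pd (g a \o h).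
Proof.
have Ht' := Ht; case: Ht' => [wf [Hmds [Hmor [Hid [Hcomp [Hleast [Hsucc [Hlim [HX [Hmg [Hgc _]]]]]]]]]]].
have gf : forall a b (y : Xs a), (a <= b)%O -> g b (f a b y) = g a y.
  by move=> a b y ab; rewrite -(Hgc a b I I ab).
apply: (well_founded_ind wf) => a IH.
suff H : forall h, mpaths (Xs a) h -> mpaths (Xs a) h /\ Pd (g a \o h).
  by move=> h hh; case: (H h hh).
case: (trich a) => [hl | [[a' ha] | hlim]].
- by have [_ [_ ->]] := Hleast a hl.
- have [n [phi [psi [mphi po]]]] := Hsucc a' a ha.
  have po' := po; case: po' => [_ [mj [mpsi [comm _]]]].
  apply: (pushout_paths (Q := [set h | mpaths (Xs a) h /\ Pd (g a \o h)]) po).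
  + exact: pull_mds (Hmds a) HX.
  + by move=> h [].
  + move=> h hh; split; first by case: mj => _ [_ ]; apply.
    have -> : g a \o (f a' a \o h) = g a' \o h.
      by apply: funext => t /=; rewrite gf // ltW // ha.1.
    exact: IH a' ha.1 h hh.
  + move=> h hh; split; first by case: mpsi => _ [_ ]; apply.
    have hh' := hh; case: hh' => z [ph [G E]].
    have zd : \sum_(i < n) (sval z) ord0 i ^+ 2 <= 1 := set_mem (svalP z).
    move: zd; rewrite le_eqVlt => /orP [/eqP /dsk_sph [z' ez'] | hz].
      pose h' := fun t => glob_cyl z' (ph t).
      have hh' : mpaths (Glob R (Sph R n)) h'.
        by exists z', ph; split.
      have pp : mpaths (Xs a') (phi \o h') by case: mphi => _ [_]; apply.
      have [_ [_ [_ px]]] := Pd_mds HX.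
      apply: (px _ _ (IH a' ha.1 _ pp)) => t It /=.
      rewrite E // -ez' -cell_incl_cyl.
      have -> : psi (cell_incl (glob_cyl z' (ph t))) = f a' a (phi (glob_cyl z' (ph t))).
        by have := congr1 (fun F => F (glob_cyl z' (ph t))) comm.
      by rewrite gf // ltW // ha.1.
    apply: Pd_min.
      case: (Hmg a I) => _ [_ ]; apply; case: mpsi => _ [_]; apply => //.
    move=> t tt /=; rewrite E; last by case/andP: tt => t0 t1; rewrite /I01 /= !ltW.
    exact: (NSX po hz (G11_int G tt)).
- apply: (colim_paths (Q := [set h | mpaths (Xs a) h /\ Pd (g a \o h)]) (Hlim a hlim)).
  + exact: pull_mds (Hmds a) HX.
  + by move=> h [].
  + move=> c hc h hh; split; first by case: (Hmor c a (ltW hc)) => _ [_]; apply.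
    have -> : g a \o (f c a \o h) = g c \o h.
      by apply: funext => t /=; rewrite gf // ltW.
    exact: IH c hc h hh.
Qed.

End M.

Unset Implicit Arguments.

Theorem theorem5p9 (R : realType) (X : mdspace R) (hX : cellular X)
    (gam : R -> X) (hgam : mpaths X gam) :
  exists (n : nat) (gs : nat -> R -> X) (ls : nat -> R),
    minimal_decomp X gam n gs ls /\
    forall (n' : nat) (gs' : nat -> R -> X) (ls' : nat -> R),
      minimal_decomp X gam n' gs' ls' ->
      n' = n /\
      forall i, (i < n)%N -> (forall t, I01 t -> gs' i t = gs i t) /\ ls' i = ls i.
Proof.
case: hX => d [Ot [Xs [f [g Ht]]]].
have Ht' := Ht; case: Ht' => [_ [_ [_ [_ [_ [_ [_ [_ Hcol]]]]]]]].
have HX : is_mdspace X by case: Hcol.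
have PX : Pd gam.
  apply: (colim_paths (Q := @Pd R X) Hcol) => //.
  - exact: Pd_mds.
  - by move=> h [].
  - by move=> a _ h hh; apply: (PL Ht).
case: PX => _ [n [gs [ls D]]].
exists n, gs, ls; split => // n' gs' ls' D'.
have H := dec_unique HX D D'; exact: H.
Qed.
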